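(* Let $d,a,b$ be positive integers with $\min(a,b)\ge d-1$, and let $\mathfrak{Irr}_d^{(a,b)}$ be the set of irreducible pairs $(\mathcal D,d)$ in $(a,b)$-standard form. Then the map $$\Psi_d^{(a,b)}:\mathfrak{Irr}_d^{(a,b)}\to\mathfrak P_d^{(a,b)}\cap\mathbb Z^{2d-4},\quad(\mathcal D,d)\mapsto(c_1(X),\dots,c_{d-2}(X),c_1(Y),\dots,c_{d-2}(Y))$$ is a well-defined bijection.
   Context: $\mathbb N=\{1,2,\dots\}$, $[n]=\{1,\dots,n\}$. A Ferrers diagram is a finite $\mathcal D\subseteq\mathbb N^2$ such that $(x,y)\in\mathcal D$ implies $(i,j)\in\mathcal D$ for all $i\in[x],j\in[y]$ (first coordinate = row, second = column). With column heights $c_i=|\mathcal D\cap(\mathbb N\times\{i\})|$, for $0\le j\le d-1$ let $\nu_j(\mathcal D,d)=\sum_{i\ge j+1}\max\{0,c_i-d+j\}$ and $\nu_{\min}(\mathcal D,d)=\min_j\nu_j(\mathcal D,d)$. A point $P\in\mathcal D$ is removable if $\mathcal D\setminus\{P\}$ is a Ferrers diagram. For $\mathcal D'=\mathcal D\setminus\{P\}$ with $P$ removable, write $\mathcal D'\xrightarrow{d}\mathcal D$ if $\nu_{\min}(\mathcal D',d)=\nu_{\min}(\mathcal D,d)$ and $\mathcal D\xrightarrow{d}\mathcal D'$ otherwise; $(\mathcal D,d)$ is irreducible if no Ferrers diagram $\mathcal D'$ satisfies $\mathcal D'\xrightarrow{d}\mathcal D$. $(\mathcal D,d)$ is in $(a,b)$-standard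 form if $\mathcal D\cap\{d-1,\dots,n\}^2=\{d-1,\dots,a\}\times\{d-1,\dots,b\}$ for any $n$ with $\mathcal D\subseteq[n]^2$; then for $i\in[d-2]$, $c_i(X)=|\{y>b:(i,y)\in\mathcal D\}|$ and $c_i(Y)=|\{x>a:(x,i)\in\mathcal D\}|$. The set $\mathfrak P_d^{(a,b)}\subseteq\mathbb R^{2d-4}$ consists of all $(x_1,\dots,x_{d-2},y_1,\dots,y_{d-2})$ with: $x_j\ge x_{j+1}$, $y_j\ge y_{j+1}$ for $j\in[d-3]$; $x_j,y_j\ge0$ for $j\in[d-2]$; $j(b-a+d-1-j)+\sum_{i=0}^{j-2}x_{d-2-i}-\sum_{i=1}^{j}y_i\ge0$ for $j\in[d-2]$; $\sum_{i=1}^{d-2}y_i-\sum_{i=1}^{d-2}x_i=(b-a)(d-1)$; and, only when $a=b=d-1$, additionally there exists $j\in[d-2]$ with $j(d-1-j)+\sum_{i=0}^{j-2}x_{d-2-i}-\sum_{i=1}^{j}y_i=0$. *)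

(* Defs.v *)
From mathcomp Require Import all_boot all_order all_algebra finmap.
Set Implicit Arguments.
Unset Strict Implicit.
Unset Printing Implicit Defensive.
Import GRing.Theory Num.Theory.
Local Open Scope fset_scope.

(* A finite set of points of N^2 (first coordinate = row, second = column). *)
Notation diagram := {fset (nat * nat)}.

Definition is_ferrers (D : diagram) : Prop :=
  forall p, p \in D ->
    [/\ (0 < p.1)%N, (0 < p.2)%N &
        forall i j, (0 < i <= p.1)%N -> (0 < j <= p.2)%N -> (i, j) \in D].

Definition col_height (D : diagram) (i : nat) : nat :=
  #|` [fset p in D | p.2 == i] |.

Definition columns (D : diagram) : {fset nat} := [fset p.2 | p in D].

(* Truncated nat subtraction realises
   max{0,.}; columns of height 0 contribute 0, so summing over the
   nonempty columns is the same as summing over all i >= j+1. *)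
Definition nu (D : diagram) (d j : nat) : nat :=
  \sum_(i <- columns D | (j < i)%N) (col_height D i - (d - j - 1))%N.

Definition nu_min (D : diagram) (d : nat) : nat :=
  \big[minn/nu D d 0]_(j < d) nu D d j.

Definition removable (P : nat * nat) (D : diagram) : Prop :=
  P \in D /\ is_ferrers (D `\ P).

Definition arrow (d : nat) (D1 D2 : diagram) : Prop :=
  (exists P, [/\ removable P D2, D1 = D2 `\ P & nu_min D1 d = nu_min D2 d])
  \/
  (exists P, [/\ removable P D1, D2 = D1 `\ P & nu_min D2 d <> nu_min D1 d]).

Definition irreducible (D : diagram) (d : nat) : Prop :=
  ~ exists D', is_ferrers D' /\ arrow d D' D.

Definition standard_form (D : diagram) (d a b : nat) : Prop :=
  forall n : nat,
    (forall p, p \in D -> (0 < p.1 <= n)%N /\ (0 < p.2 <= n)%N) ->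
    forall x y : nat,
      ((x, y) \in D /\ (d - 1 <= x <= n)%N /\ (d - 1 <= y <= n)%N)
      <-> ((d - 1 <= x <= a)%N /\ (d - 1 <= y <= b)%N).

Definition cX (D : diagram) (b i : nat) : nat :=
  #|` [fset p in D | (p.1 == i) && (b < p.2)%N] |.
Definition cY (D : diagram) (a i : nat) : nat :=
  #|` [fset p in D | (p.2 == i) && (a < p.1)%N] |.

Definition Irr (d a b : nat) (D : diagram) : Prop :=
  [/\ is_ferrers D, standard_form D d a b & irreducible D d].

Local Open Scope ring_scope.

Definition Pform (d a b : nat) (x y : nat -> int) (j : nat) : int :=
  (j%:Z * (b%:Z - a%:Z + d%:Z - 1 - j%:Z))
  + (\sum_(0 <= i < j.-1) x (d - 2 - i)%N)
  - (\sum_(1 <= i < j.+1) y i).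

(* P_d^(a,b) ∩ Z^(2d-4); a vector (x_1..x_{d-2}, y_1..y_{d-2}) is given by
   two functions x y : nat -> int, of which only the indices 1..d-2 matter. *)
Definition inP (d a b : nat) (x y : nat -> int) : Prop :=
  [/\ (forall j, (1 <= j <= d - 3)%N -> x j.+1 <= x j /\ y j.+1 <= y j),
      (forall j, (1 <= j <= d - 2)%N -> 0 <= x j /\ 0 <= y j),
      (forall j, (1 <= j <= d - 2)%N -> 0 <= Pform d a b x y j),
      (\sum_(1 <= i < d - 1) y i) - (\sum_(1 <= i < d - 1) x i)
        = (b%:Z - a%:Z) * (d%:Z - 1)
    & ((a = b /\ b = d - 1)%N ->
        exists j, (1 <= j <= d - 2)%N /\ Pform d a b x y j = 0)].

(* Main.v *)
Require Import Defs.
From mathcomp Require Import all_boot all_order all_algebra finmap zify ring.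
Import GRing.Theory Num.Theory.
Local Open Scope fset_scope.
Local Open Scope nat_scope.
Set Implicit Arguments. Unset Strict Implicit. Unset Printing Implicit Defensive.

Lemma sum_pick (M i : nat) (F : nat -> nat) :
  \sum_(0 <= k < M) (if k == i then F k else 0) = if i < M then F i else 0.
Proof.
elim: M => [|M IH]; first by rewrite big_nil ltn0.
rewrite big_nat_recr //= IH.
case: (boolP (i < M)) => h.
- have -> : (M == i) = false by lia.
  have -> : (i < M.+1) = true by lia.
  by rewrite addn0.
case: (boolP (M == i)) => h2.
- have -> : (i < M.+1) = true by lia.
  by rewrite (eqP h2).
have -> : (i < M.+1) = false by lia.
by [].
Qed.

Lemma sum_interval (M lo hi : nat) : hi < M ->
  \sum_(0 <= r < M) ((lo < r) && (r <= hi) : nat) = hi - lo.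
Proof.
move=> hM.
have gen : forall M, \sum_(0 <= r < M) ((lo < r) && (r <= hi) : nat) = minn M.-1 hi - lo.
  elim=> [|m IH]; first by rewrite big_nil /= min0n.
  rewrite big_nat_recr //= IH.
  case: (boolP (lo < m)) => h1; case: (boolP (m <= hi)) => h2 /=; case: m IH h1 h2 => [|m] IH h1 h2 /=; lia.
rewrite gen; lia.
Qed.

Definition grid (M : nat) : seq (nat * nat) :=
  [seq (r, i) | r <- iota 0 M, i <- iota 0 M].

Lemma card_grid (A : {fset (nat * nat)}) (M : nat) :
  (forall p, p \in A -> p.1 < M /\ p.2 < M) ->
  #|` A| = \sum_(0 <= r < M) \sum_(0 <= i < M) ((r, i) \in A : nat).
Proof.
move=> hA.
have -> : #|` A| = \sum_(p <- enum_fset A) 1 by rewrite sum1_size.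
have hp : perm_eq (enum_fset A) [seq p <- grid M | p \in A].
  apply: uniq_perm.
  - exact: fset_uniq.
  - apply: filter_uniq; apply: allpairs_uniq; rewrite ?iota_uniq //.
    by move=> [? ?] [? ?] /= _ _ [-> ->].
  move=> p; rewrite mem_filter.
  case: (boolP (p \in A)) => h /=; last by [].
  symmetry; case: p h => r i h; have [h1 h2] := hA _ h.
  by apply/allpairsP; exists (r, i); rewrite !mem_iota /=; split.
rewrite (perm_big _ hp) /= big_filter big_mkcond /grid big_allpairs.
rewrite /index_iota subn0; apply: (@eq_bigr nat 0 addn) => r _; apply: (@eq_bigr nat 0 addn) => i _; by case: ((r, i) \in A).
Qed.

Lemma bound_ex (D : diagram) : exists M, forall p, p \in D -> p.1 < M /\ p.2 < M.
Proof.
exists (\max_(p <- enum_fset D) (maxn p.1 p.2)).+1 => p hp.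
have := @leq_bigmax_seq _ (enum_fset D) xpredT (fun q : nat * nat => maxn q.1 q.2) p hp (erefl true).
rewrite !ltnS geq_max => /andP [h1 h2]; by split.
Qed.

Lemma downclosed_interval (p : nat -> bool) M : 0 < M ->
  (forall r, p r -> 0 < r < M) ->
  (forall r r', p r -> 0 < r' <= r -> p r') ->
  exists c, c < M /\ forall r, p r = (0 < r <= c).
Proof.
move=> hM hb hd.
case: (boolP (has p (iota 0 M))) => hh.
- have exP : exists i, p i by move/hasP: hh => [i _ pi]; exists i.
  have ubP : forall i, p i -> i <= M by move=> i /hb; lia.
  case: (ex_maxnP exP ubP) => c pc maxc.
  exists c; split; first by have := hb _ pc; lia.
  move=> r; apply/idP/idP.
  + by move=> pr; have := hb _ pr; have := maxc _ pr; lia.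
  + by move=> hr; apply: (hd c) => //.
- exists 0; split => //.
  move=> r; have -> : (0 < r <= 0) = false by lia.
  apply/negbTE; apply/negP => pr.
  move/hasP: hh; apply; exists r => //; rewrite mem_iota; have := hb _ pr; lia.
Qed.

Definition bounded (D : diagram) M := forall p, p \in D -> p.1 < M /\ p.2 < M.

Lemma col_interval (D : diagram) M i : 0 < M -> is_ferrers D -> bounded D M ->
  exists c, c < M /\ forall r, ((r, i) \in D) = (0 < r <= c).
Proof.
move=> hM hF hB; apply: downclosed_interval => //.
- move=> r hr; have [h1 _ _] := hF _ hr; have [h3 _] := hB _ hr; by rewrite h1.
- move=> r r' hr hr'; have [_ h2 h3] := hF _ hr; apply: h3 => //=; by rewrite h2 leqnn.
Qed.

Lemma row_interval (D : diagram) M r : 0 < M -> is_ferrers D -> bounded D M ->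
  exists c, c < M /\ forall i, ((r, i) \in D) = (0 < i <= c).
Proof.
move=> hM hF hB; apply: downclosed_interval => //.
- move=> i hi; have [_ h1 _] := hF _ hi; have [_ h3] := hB _ hi; by rewrite h1.
- move=> i i' hi hi'; have [h2 _ h3] := hF _ hi; apply: h3 => //=; by rewrite h2 leqnn.
Qed.

Lemma sep_mem (D : diagram) (P : pred (nat * nat)) p :
  (p \in [fset q in D | P q]) = (p \in D) && P p.
Proof. by rewrite !inE. Qed.

Lemma big_uniq_nat (s : seq nat) M (F : nat -> nat) : uniq s ->
  (forall i, i \in s -> i < M) -> (forall i, i < M -> i \notin s -> F i = 0) ->
  \sum_(i <- s) F i = \sum_(0 <= i < M) F i.
Proof.
move=> us hs hF.
rewrite [RHS](bigID (fun i => i \in s)) /=.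
have -> : \sum_(i <- index_iota 0 M | i \notin s) F i = 0.
  by rewrite big1_seq // => i /andP [hi]; rewrite mem_index_iota => /andP [_ hi2]; apply: hF.
rewrite addn0.
have hp : perm_eq s [seq i <- index_iota 0 M | i \in s].
  apply: uniq_perm => //; first by apply: filter_uniq; apply: iota_uniq.
  move=> i; rewrite mem_filter mem_index_iota; case: (boolP (i \in s)) => // h.
  by rewrite (hs _ h).
by rewrite -[in RHS]big_filter (perm_big _ hp).
Qed.

Definition N (D : diagram) (d M j : nat) : nat :=
  \sum_(0 <= i < M) \sum_(0 <= r < M) ((j < i) && (d - j - 1 < r) && ((r, i) \in D)).

Lemma bool_if (b c : bool) : ((b && c) : nat) = if c then (b : nat) else 0.
Proof. by case: b; case: c. Qed.

Lemma col_height_sum (D : diagram) M i : bounded D M -> i < M ->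
  col_height D i = \sum_(0 <= r < M) ((r, i) \in D).
Proof.
move=> hB hi; rewrite /col_height (card_grid (M := M)); last first.
  by move=> p; rewrite sep_mem => /andP [/hB].
apply: eq_bigr => r _.
under eq_bigr => k _ do rewrite sep_mem /= bool_if.
by rewrite sum_pick hi.
Qed.

Lemma col_height0 (D : diagram) i : (forall r, (r, i) \notin D) -> col_height D i = 0.
Proof.
move=> h; rewrite /col_height; apply/eqP; rewrite cardfs_eq0; apply/eqP/fsetP => p.
rewrite sep_mem inE; case: p => r k /=; case: (boolP (k == i)) => [/eqP ->|]; last by rewrite andbF.
by rewrite (negbTE (h r)).
Qed.

Lemma nu_N (D : diagram) d M j : 0 < M -> is_ferrers D -> bounded D M ->
  nu D d j = N D d M j.
Proof.
move=> hM hF hB; rewrite /nu /N big_mkcond /=.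
rewrite (@big_uniq_nat _ M).
- apply: eq_big_nat => i /andP [_ hi].
  have [c [hc hcol]] := col_interval i hM hF hB.
  rewrite (col_height_sum hB hi).
  under eq_bigr => r _ do rewrite hcol.
  under [X in _ = X]eq_bigr => r _ do rewrite hcol.
  have -> : \sum_(0 <= i0 < M) ((0 < i0 <= c) : nat) = c.
    by rewrite -[RHS]subn0 -(sum_interval 0 hc).
  case: (boolP (j < i)) => hji /=.
  + rewrite -(sum_interval (d - j - 1) hc); apply: eq_bigr => r _.
    case: (boolP (d - j - 1 < r)) => //= h; case: (r <= c); rewrite ?andbT ?andbF //; lia.
  + by rewrite big1.
- exact: fset_uniq.
- by move=> i /imfsetP [p /= hp ->]; have [] := hB _ hp.
- move=> i hi hn; rewrite col_height0 ?if_same // => r; apply/negP => hr.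
  by move/negP: hn; apply; apply/imfsetP; exists (r, i).
Qed.

Lemma sum_pick2 M (P : nat * nat) (Q : nat -> nat -> bool) : P.1 < M -> P.2 < M ->
  \sum_(0 <= i < M) \sum_(0 <= r < M) ((Q r i) && ((r, i) == P) : nat) = Q P.1 P.2.
Proof.
case: P => p1 p2 /= h1 h2.
have e : forall i r, ((Q r i) && ((r, i) == (p1, p2)) : nat) =
   if r == p1 then (if i == p2 then (Q r i : nat) else 0) else 0.
  move=> i r; rewrite xpair_eqE; case: (i == p2); case: (r == p1); by rewrite ?andbT ?andbF.
under eq_bigr => i _ do under eq_bigr => r _ do rewrite e.
under eq_bigr => i _ do rewrite (sum_pick M p1 (fun r => if i == p2 then (Q r i : nat) else 0)) h1.
by rewrite (sum_pick M p2 (fun i => (Q p1 i : nat))) h2.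
Qed.

Lemma N_rem (D : diagram) d M j P : bounded D M -> P \in D ->
  N D d M j = N (D `\ P) d M j + ((j < P.2) && (d - j - 1 < P.1)).
Proof.
move=> hB hP; have [h1 h2] := hB _ hP.
rewrite /N -(sum_pick2 (fun r i => (j < i) && (d - j - 1 < r)) h1 h2) -big_split /=.
apply: eq_bigr => i _; rewrite -big_split /=; apply: eq_bigr => r _.
rewrite in_fsetD1; case: (boolP ((r, i) == P)) => [/eqP ->|hn] /=.
- by rewrite hP !andbT andbF.
- by rewrite !andbF addn0.
Qed.

Lemma bounded_sub (D E : diagram) M : bounded D M -> (forall p, p \in E -> p \in D) -> bounded E M.
Proof. by move=> hB hs p /hs /hB. Qed.

Lemma nu_rem (D : diagram) d j P : is_ferrers D -> P \in D -> is_ferrers (D `\ P) ->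
  nu D d j = nu (D `\ P) d j + ((j < P.2) && (d - j - 1 < P.1)).
Proof.
move=> hF hP hF'.
have [M0 hM0] := bound_ex D.
have hB : bounded D M0.+1 by move=> p /hM0 [? ?]; split; apply: ltnW.
have hB' : bounded (D `\ P) M0.+1.
  by apply: (@bounded_sub D) => // p; rewrite in_fsetD1 => /andP [].
by rewrite (nu_N d j _ hF hB) // (nu_N d j _ hF' hB') // (N_rem d j hB hP).
Qed.

Lemma seqmin_le (I : eqType) (s : seq I) (x : nat) (F : I -> nat) i :
  i \in s -> \big[minn/x]_(k <- s) F k <= F i.
Proof.
elim: s => [//|h t IH]; rewrite inE big_cons => /orP [/eqP ->|hi].
- by rewrite geq_minl.
- by rewrite geq_min IH // orbT.
Qed.

Lemma seqmin_x (I : eqType) (s : seq I) (x : nat) (F : I -> nat) :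
  \big[minn/x]_(k <- s) F k <= x.
Proof.
elim: s => [|h t IH]; first by rewrite big_nil.
by rewrite big_cons geq_min IH orbT.
Qed.

Lemma seqmin_ex (I : eqType) (s : seq I) (x : nat) (F : I -> nat) :
  \big[minn/x]_(k <- s) F k = x \/ exists2 i, i \in s & \big[minn/x]_(k <- s) F k = F i.
Proof.
elim: s => [|h t IH]; first by left; rewrite big_nil.
rewrite big_cons; case: (leqP (F h) (\big[minn/x]_(k <- t) F k)) => hle.
- by right; exists h; [rewrite inE eqxx | ].
- case: IH => [->|[i hi ->]]; first by left.
  by right; exists i => //; rewrite inE hi orbT.
Qed.

Lemma bigmin_le (f : nat -> nat) d j : j < d -> \big[minn/f 0]_(k < d) f k <= f j.
Proof.
move=> hj; exact: (@seqmin_le _ (index_enum 'I_d) (f 0) (f \o (@nat_of_ord d)) (Ordinal hj) (mem_index_enum _)).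
Qed.

Lemma bigmin_ex (f : nat -> nat) d : 0 < d -> exists2 j, j < d & \big[minn/f 0]_(k < d) f k = f j.
Proof.
move=> hd.
case: (seqmin_ex (index_enum 'I_d) (f 0) (f \o (@nat_of_ord d))) => [->|[i _ ->]].
- by exists 0.
- by exists i.
Qed.

Lemma numin_le (D : diagram) d j : j < d -> nu_min D d <= nu D d j.
Proof. exact: bigmin_le. Qed.

Lemma numin_ex (D : diagram) d : 0 < d -> exists2 j, j < d & nu_min D d = nu D d j.
Proof. exact: bigmin_ex. Qed.

Lemma numin_eq (D : diagram) d m : 0 < d -> (forall j, j < d -> m <= nu D d j) ->
  (exists2 j, j < d & nu D d j = m) -> nu_min D d = m.
Proof.
move=> hd hle [j hj hm]; apply/eqP; rewrite eqn_leq; apply/andP; split.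
- by rewrite -hm numin_le.
- by have [k hk ->] := numin_ex D hd; apply: hle.
Qed.

Lemma bound_pos (D : diagram) : exists2 M, 0 < M & bounded D M.
Proof.
have [M0 hM0] := bound_ex D; exists M0.+1 => //.
by move=> p /hM0 [? ?]; split; apply: ltnW.
Qed.

Lemma std_in (D : diagram) d a b : is_ferrers D -> standard_form D d a b ->
  forall r i, d - 1 <= r -> d - 1 <= i -> ((r, i) \in D) = (r <= a) && (i <= b).
Proof.
move=> hF hS r i hr hi.
have [M hM hB] := bound_pos D.
have hn : forall p, p \in D -> 0 < p.1 <= maxn M (maxn a b) /\ 0 < p.2 <= maxn M (maxn a b).
  move=> p hp; have [h1 h2 _] := hF _ hp; have [h3 h4] := hB _ hp; lia.
have := hS _ hn r i => [[h1 h2]].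
apply/idP/idP.
- move=> hin; have [h3 h4] := hB _ hin; rewrite /= in h3 h4.
  case: h1 => [|ha hb2]; first by split => //; split; lia.
  apply/andP; split; lia.
- move=> /andP [ha hb]; case: h2 => [|? _] //; split; lia.
Qed.

Lemma sum_row (A : diagram) M r (Q : nat -> bool) : r < M ->
  \sum_(0 <= r' < M) \sum_(0 <= i < M) (((r', i) \in A) && ((r' == r) && Q i) : nat)
  = \sum_(0 <= i < M) (((r, i) \in A) && Q i : nat).
Proof.
move=> hr.
rewrite (eq_bigr (fun r' => if r' == r then \sum_(0 <= i < M) (((r', i) \in A) && Q i : nat) else 0)).
  by rewrite (sum_pick M r (fun r' => \sum_(0 <= i < M) (((r', i) \in A) && Q i : nat))) hr.
move=> r' _; case: (eqVneq r' r) => [->|hne].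
- by apply: eq_bigr => i _; rewrite ?eqxx.
- by rewrite big1 // => i _; rewrite andbF.
Qed.

Lemma sum_col (A : diagram) M c (Q : nat -> bool) : c < M ->
  \sum_(0 <= r' < M) \sum_(0 <= i < M) (((r', i) \in A) && ((i == c) && Q r') : nat)
  = \sum_(0 <= r < M) (((r, c) \in A) && Q r : nat).
Proof.
move=> hc; apply: eq_bigr => r' _.
rewrite (eq_bigr (fun i => if i == c then (((r', i) \in A) && Q r' : nat) else 0)).
  by rewrite (sum_pick M c (fun i => (((r', i) \in A) && Q r' : nat))) hc.
move=> i _; case: (eqVneq i c) => [->|hne] //.
by rewrite andbF.
Qed.

Lemma cX_row (D : diagram) M b r L : bounded D M -> r < M ->
  (forall i, ((r, i) \in D) = (0 < i <= L)) -> cX D b r = L - b.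
Proof.
move=> hB hr hrow.
have hL : L < M \/ L = 0.
  case: L hrow => [|L] hrow; [by right | left].
  have hin : (r, L.+1) \in D by rewrite hrow /= leqnn.
  by have [] := hB _ hin.
rewrite /cX (card_grid (M := M)); last by move=> p; rewrite sep_mem => /andP [/hB].
under eq_bigr => r' _ do under eq_bigr => i _ do rewrite sep_mem /=.
rewrite (sum_row D (fun i => b < i) hr).
under eq_bigr => i _ do rewrite hrow.
case: hL => [hL|->].
- rewrite -(sum_interval b hL); apply: eq_bigr => i _.
  case: (boolP (b < i)) => h; rewrite ?andbF ?andbT //=.
  by have -> : 0 < i by lia.
- by rewrite big1 // => i _; case: i => [|i] //=; rewrite andbF.
Qed.

Lemma cY_col (D : diagram) M a c L : bounded D M -> c < M ->
  (forall r, ((r, c) \in D) = (0 < r <= L)) -> cY D a c = L - a.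
Proof.
move=> hB hc hcol.
have hL : L < M \/ L = 0.
  case: L hcol => [|L] hcol; [by right | left].
  have hin : (L.+1, c) \in D by rewrite hcol /= leqnn.
  by have [] := hB _ hin.
rewrite /cY (card_grid (M := M)); last by move=> p; rewrite sep_mem => /andP [/hB].
under eq_bigr => r' _ do under eq_bigr => i _ do rewrite sep_mem /=.
rewrite (sum_col D (fun r => a < r) hc).
under eq_bigr => r _ do rewrite hcol.
case: hL => [hL|->].
- rewrite -(sum_interval a hL); apply: eq_bigr => r _.
  case: (boolP (a < r)) => h; rewrite ?andbF ?andbT //=.
  by have -> : 0 < r by lia.
- by rewrite big1 // => r _; case: r => [|r] //=; rewrite andbF.
Qed.

Definition memb (a b : nat) (x y : nat -> nat) (r i : nat) : bool :=
  [|| (0 < r <= a) && (0 < i <= b), (0 < r) && (b < i <= b + x r)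
    | (0 < i) && (a < r <= a + y i)].

Lemma bounded_mono (D : diagram) M M' : M <= M' -> bounded D M -> bounded D M'.
Proof. by move=> h hB p /hB [h1 h2]; split; apply: (leq_trans _ h). Qed.

Lemma std_memb (D : diagram) d a b : 2 <= d -> d - 1 <= a -> d - 1 <= b ->
  is_ferrers D -> standard_form D d a b ->
  [/\ (forall r, d - 1 <= r -> cX D b r = 0),
      (forall i, d - 1 <= i -> cY D a i = 0)
    & forall r i, ((r, i) \in D) = memb a b (cX D b) (cY D a) r i].
Proof.
move=> hd ha hb hF hS.
have [M0 hM0 hB0] := bound_pos D.
have hab : (a, b) \in D by rewrite (std_in hF hS) // !leqnn.
have rowf : forall r, exists L, [/\ cX D b r = L - b & forall i, ((r, i) \in D) = (0 < i <= L)].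
  move=> r; have hB := bounded_mono (leq_maxl M0 r.+1) hB0.
  have [L [_ hL]] := row_interval r (leq_trans hM0 (leq_maxl _ _)) hF hB.
  exists L; split => //; apply: (cX_row _ hB) => //; exact: leq_maxr.
have colf : forall i, exists L, [/\ cY D a i = L - a & forall r, ((r, i) \in D) = (0 < r <= L)].
  move=> i; have hB := bounded_mono (leq_maxl M0 i.+1) hB0.
  have [L [_ hL]] := col_interval i (leq_trans hM0 (leq_maxl _ _)) hF hB.
  exists L; split => //; apply: (cY_col _ hB) => //; exact: leq_maxr.
have hX : forall r, d - 1 <= r -> cX D b r = 0.
  move=> r hr; have [L [-> hL]] := rowf r.
  case: (leqP L b) => hLb; first by apply/eqP; rewrite subn_eq0.
  have : (r, L) \in D by rewrite hL; lia.
  by rewrite (std_in hF hS) //; lia.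
have hY : forall i, d - 1 <= i -> cY D a i = 0.
  move=> i hi; have [L [-> hL]] := colf i.
  case: (leqP L a) => hLa; first by apply/eqP; rewrite subn_eq0.
  have : (L, i) \in D by rewrite hL; lia.
  by rewrite (std_in hF hS) //; lia.
split => // r i.
have h0 : forall r i, (r, i) \in D -> 0 < r /\ 0 < i by move=> r' i' /hF [].
case: (posnP r) => [->|hr].
  have -> : ((0, i) \in D) = false by apply/negbTE/negP => /h0 [].
  rewrite /memb; lia.
case: (posnP i) => [->|hi].
  have -> : ((r, 0) \in D) = false by apply/negbTE/negP => /h0 [].
  rewrite /memb; lia.
case: (leqP (d - 1) r) => hr2; case: (leqP (d - 1) i) => hi2.
- rewrite (std_in hF hS) // /memb hX // hY //; lia.
- have [L [hc hL]] := colf i; rewrite hL /memb hc.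
  have : (a, i) \in D by have [_ _ h] := hF _ hab; apply: h => /=; lia.
  rewrite hL => hLa; lia.
- have [L [hc hL]] := rowf r; rewrite hL /memb hc.
  have : (r, b) \in D by have [_ _ h] := hF _ hab; apply: h => /=; lia.
  rewrite hL => hLb; lia.
- have [L [hc hL]] := rowf r; rewrite hL /memb hc.
  have : (r, b) \in D by have [_ _ h] := hF _ hab; apply: h => /=; lia.
  rewrite hL => hLb; lia.
Qed.

Lemma sum_mulr_const M (f : nat -> nat) c :
  \sum_(0 <= i < M) (f i * c) = (\sum_(0 <= i < M) f i) * c.
Proof. by rewrite big_distrl. Qed.

Lemma N_closed (D : diagram) d a b (x y : nat -> nat) M j :
  d - 1 <= a -> d - 1 <= b -> j < d ->
  (forall r, d - 1 <= r -> x r = 0) -> (forall i, d - 1 <= i -> y i = 0) ->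
  (forall r, b + x r < M) -> (forall i, a + y i < M) -> a < M -> b < M ->
  (forall r i, ((r, i) \in D) = memb a b x y r i) ->
  N D d M j = (b - j) * (a - (d - j - 1))
    + \sum_(0 <= r < M) ((d - j - 1 < r) * x r)
    + \sum_(0 <= i < M) ((j < i) * y i).
Proof.
move=> ha hb hj hx hy hxM hyM haM hbM hD.
set t := d - j - 1.
have split3 : forall i r, ((j < i) && (t < r) && ((r, i) \in D) : nat) =
   ((j < i) && (i <= b)) * ((t < r) && (r <= a))
   + ((t < r) && ((b < i) && (i <= b + x r)))
   + ((j < i) && ((a < r) && (r <= a + y i))).
  move=> i r; rewrite hD /memb.
  case: (leqP (d - 1) r) => hr; [rewrite (hx r hr) | ];
  (case: (leqP (d - 1) i) => hi; [rewrite (hy i hi) | ]); rewrite /t; lia.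
rewrite /N.
under eq_bigr => i _ do under eq_bigr => r _ do rewrite split3.
under eq_bigr => i _ do rewrite !big_split /=.
rewrite !big_split /=.
congr (_ + _ + _).
- under eq_bigr => i _ do rewrite -big_distrr /= (sum_interval t haM).
  by rewrite sum_mulr_const (sum_interval j hbM).
- rewrite exchange_big /=; apply: eq_bigr => r _.
  case: (boolP (t < r)) => htr /=.
  + by rewrite (sum_interval b (hxM r)) mul1n addKn.
  + by rewrite big1_eq mul0n.
- apply: eq_bigr => i _.
  case: (boolP (j < i)) => hji /=.
  + by rewrite (sum_interval a (hyM i)) mul1n addKn.
  + by rewrite big1_eq mul0n.
Qed.


Lemma sum_gt_step M t (f : nat -> nat) : t.+1 < M ->
  \sum_(0 <= r < M) ((t < r) * f r) = f t.+1 + \sum_(0 <= r < M) ((t.+1 < r) * f r).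
Proof.
move=> ht.
have := sum_pick M t.+1 f; rewrite ht => <-.
rewrite -big_split /=; apply: eq_big_nat => r _.
case: (eqVneq r t.+1) => [->|hne]; first by rewrite ltnSn ltnn mul1n mul0n addn0.
rewrite add0n; congr (_ * _); lia.
Qed.

Local Open Scope ring_scope.

Lemma Pform0 d a b X Y : Pform d a b X Y 0 = 0.
Proof. by rewrite /Pform !big_geq ?mul0r ?subr0 ?addr0. Qed.

Lemma Pform_step d a b (X Y : nat -> int) j :
  Pform d a b X Y j.+1 = Pform d a b X Y j
     + (b%:Z - a%:Z + d%:Z - 2 - 2 * j%:Z)
     + (if j is 0 then 0 else X (d - 1 - j)%N) - Y j.+1.
Proof.
rewrite /Pform.
have hy : \sum_(1 <= i < j.+2) Y i = \sum_(1 <= i < j.+1) Y i + Y j.+1 by rewrite big_nat_recr.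
have hx : \sum_(0 <= i < j.+1.-1) X (d - 2 - i)%N =
   \sum_(0 <= i < j.-1) X (d - 2 - i)%N + (if j is 0 then 0 else X (d - 1 - j)%N).
  case: j {hy} => [|j] /=; first by rewrite big_geq // addr0.
  rewrite big_nat_recr //= (_ : (d - 2 - j)%N = (d - 1 - j.+1)%N) //; lia.
rewrite hy hx; set m := (match j with 0%N => _ | _ => _ end); rewrite -[j.+1]addn1 PoszD; ring.
Qed.


Lemma N_Pform (D : diagram) d a b (x y : nat -> nat) M j :
  (d - 1 <= a)%N -> (d - 1 <= b)%N -> (j < d)%N ->
  (forall r, d - 1 <= r -> x r = 0)%N -> (forall i, d - 1 <= i -> y i = 0)%N ->
  (forall r, b + x r < M)%N -> (forall i, a + y i < M)%N -> (a < M)%N -> (b < M)%N ->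
  (forall r i, ((r, i) \in D) = memb a b x y r i) ->
  (N D d M j)%:Z - (N D d M 0)%:Z = Pform d a b (fun i => (x i)%:Z) (fun i => (y i)%:Z) j.
Proof.
move=> ha hb hj hx hy hxM hyM haM hbM hD.
elim: j hj => [|j IH] hj; first by rewrite subrr Pform0.
rewrite Pform_step -IH; last by apply: ltnW.
have hxj : (if j is 0 then 0 else (x (d - 1 - j)%N)%:Z) = (x (d - 1 - j)%N)%:Z.
  by case: j {IH hj} => [|j] //; rewrite subn0 hx.
rewrite hxj.
rewrite (N_closed ha hb hj hx hy hxM hyM haM hbM hD).
rewrite (N_closed ha hb (ltnW hj) hx hy hxM hyM haM hbM hD).
have e1 : (d - j.+1 - 1 = (d - j - 2).+1 - 1)%N by lia.
rewrite (sum_gt_step (t := (d - j.+1 - 1)%N) x); last by lia.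
rewrite (sum_gt_step (t := j) y); last by lia.
have e2 : ((d - j.+1 - 1).+1 = d - j - 1)%N by lia.
rewrite e2 (_ : (d - 1 - j = d - j - 1)%N); last by lia.
set Sx := \sum_(0 <= r < M) _. set Sy := \sum_(0 <= r < M) _.
have key : ((b - j.+1) * (a - (d - j.+1 - 1)) + (a - (d - j - 1))
            = (b - j) * (a - (d - j - 1)) + (b - j.+1))%N.
  have -> : (b - j = (b - j.+1).+1)%N by lia.
  have -> : (a - (d - j.+1 - 1) = (a - (d - j - 1)).+1)%N by lia.
  set v := (b - j.+1)%N; set u := (a - (d - j - 1))%N.
  rewrite mulnS mulSn; lia.
lia.
Qed.


Local Open Scope nat_scope.

Lemma ferrers_add (D : diagram) r i : is_ferrers D -> 0 < r -> 0 < i ->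
  (r = 1 \/ (r.-1, i) \in D) -> (i = 1 \/ (r, i.-1) \in D) -> is_ferrers ((r, i) |` D).
Proof.
move=> hF hr hi hr1 hi1 p; rewrite in_fset1U => /orP [/eqP ->|hp] /=.
- split => // i' j' hi' hj'.
  rewrite in_fset1U; case: (eqVneq (i', j') (r, i)) => //= hne.
  case: (ltngtP i' r) => h1.
  + case: hr1 => [e|hin]; first lia.
    by have [_ _ h] := hF _ hin; apply: h => /=; lia.
  + lia.
  + case: (ltngtP j' i) => h2.
    * case: hi1 => [e|hin]; first lia.
      by have [_ _ h] := hF _ hin; apply: h => /=; lia.
    * lia.
    * by move: hne; rewrite h1 h2 eqxx.
- have [h1 h2 h3] := hF _ hp; split => // i' j' hi' hj'.
  by rewrite in_fset1U h3 ?orbT.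
Qed.

Lemma ferrers_rem (D : diagram) r i : is_ferrers D -> (r, i) \in D ->
  (r.+1, i) \notin D -> (r, i.+1) \notin D -> is_ferrers (D `\ (r, i)).
Proof.
move=> hF hin h1 h2 p; rewrite in_fsetD1 => /andP [hne hp].
have [p1 p2 h3] := hF _ hp; split => // i' j' hi' hj'.
rewrite in_fsetD1 h3 // andbT; apply/negP => /eqP [e1 e2]; subst i' j'.
move: hne; case: p hp p1 p2 h3 hi' hj' => a b /= hp p1 p2 h3 hi' hj' hne.
case: (ltngtP r a) => ha.
- by move/negP: h1; apply; apply: h3; lia.
- lia.
- case: (ltngtP i b) => hb.
  + by move/negP: h2; apply; apply: h3; lia.
  + lia.
  + by move: hne; rewrite ha hb eqxx.
Qed.

Lemma reducible_add (D : diagram) d P : 0 < d -> is_ferrers D -> P \notin D ->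
  is_ferrers (P |` D) ->
  (forall j, j < d -> nu D d j = nu_min D d -> (j < P.2) && (d - j - 1 < P.1)) ->
  ~ irreducible D d.
Proof.
move=> hd hF hP hF' hJ; apply; exists (P |` D); split => //; right; exists P.
have hin : P \in P |` D by rewrite fsetU11.
have eD : (P |` D) `\ P = D by rewrite fsetU1K.
split; [by split; rewrite ?eD | by rewrite eD | ].
have [j0 hj0 e0] := numin_ex (P |` D) hd.
have := nu_rem d j0 hF' hin; rewrite eD => /(_ hF) e1.
move=> e; move: e0; rewrite -e e1.
have := numin_le D hj0; rewrite leq_eqVlt => /orP [/eqP e2|h2].
- by rewrite -e2 (hJ _ hj0 (esym e2)); lia.
- lia.
Qed.

Lemma reducible_rem (D : diagram) d P : 0 < d -> is_ferrers D -> P \in D ->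
  is_ferrers (D `\ P) ->
  (forall j, j < d -> nu D d j = nu_min D d -> ~~ ((j < P.2) && (d - j - 1 < P.1))) ->
  ~ irreducible D d.
Proof.
move=> hd hF hP hF' hJ; apply; exists (D `\ P); split => //; left; exists P.
split => //.
apply: numin_eq => //.
- move=> j hj; have := nu_rem d j hF hP hF'.
  have := numin_le D hj; rewrite leq_eqVlt => /orP [/eqP e2|h2].
  + by rewrite -e2 (negbTE (hJ _ hj (esym e2))) addn0 => <-; rewrite e2.
  + lia.
- have [j hj e] := numin_ex D hd; exists j => //.
  have := nu_rem d j hF hP hF'; rewrite (negbTE (hJ _ hj (esym e))) addn0.
  by rewrite e.
Qed.

Lemma irr_suff (D : diagram) d a b : 2 <= d -> d - 1 <= a -> d - 1 <= b ->
  is_ferrers D -> standard_form D d a b ->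
  (forall j, j < d -> nu D d 0 <= nu D d j) -> nu D d (d - 1) = nu D d 0 ->
  (a = b /\ b = d - 1 -> exists j, 1 <= j <= d - 2 /\ nu D d j = nu D d 0) ->
  irreducible D d.
Proof.
move=> hd ha hb hF hS hle hlast hextra [D' [hF' harr]].
have hd0 : 0 < d by lia.
have hm : nu_min D d = nu D d 0 by apply: numin_eq => //; exists 0.
case: harr => [[P [[hPin hF2] eD' heq]]|[P [[hPin hF2] eD hne]]].
- subst D'; move: heq; rewrite hm => heq.
  case: P hPin hF2 heq hF' => r i hPin hF2 heq hF'.
  have [hr hi _] := hF _ hPin; rewrite /= in hr hi.
  have hlt : forall j, j < d -> nu D d j = nu D d 0 -> (j < i) && (d - j - 1 < r) -> False.
    move=> j hj hj0 hji.
    have e := nu_rem d j hF hPin hF2; rewrite /= hji /= in e.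
    have := numin_le (D `\ (r, i)) hj; rewrite heq; lia.
  case: (leqP d i) => hdi; first by apply: (hlt (d - 1)) => //; lia.
  case: (leqP d r) => hdr; first by apply: (hlt 0) => //; lia.
  have hab : (a, b) \in D by rewrite (std_in hF hS) // !leqnn.
  have ePab : (r, i) = (a, b).
    apply/eqP; apply: contraT => hne.
    have : (a, b) \in D `\ (r, i) by rewrite in_fsetD1 eq_sym hne hab.
    move=> /hF2 [_ _ h].
    have : (r, i) \in D `\ (r, i) by apply: h => /=; lia.
    by rewrite in_fsetD1 eqxx.
  case: ePab => er ei; subst r i.
  have : a = b /\ b = d - 1 by split; lia.
  move/hextra => [j [hj1 hj2]].
  by apply: (hlt j) => //; lia.
- case: P hPin hF2 eD hne => r i hPin hF2 eD hne.
  have hnotin : (r, i) \notin D by rewrite eD in_fsetD1 eqxx.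
  have hadd : forall j, nu D' d j = nu D d j + ((j < i) && (d - j - 1 < r)).
    by move=> j; rewrite eD; apply: nu_rem.
  have [hr hi _] := hF' _ hPin; rewrite /= in hr hi.
  apply: hne; rewrite hm; apply/esym/numin_eq => //.
    by move=> j hj; rewrite hadd; have := hle _ hj; lia.
  case: (leqP i (d - 1)) => hdi.
    exists (d - 1); first lia.
    by rewrite hadd hlast (_ : (d - 1 < i) = false) //; lia.
  case: (leqP r (d - 1)) => hdr.
    exists 0; first lia.
    by rewrite hadd (_ : (d - 0 - 1 < r) = false) ?andbF ?addn0 //; lia.
  exfalso; move/negP: hnotin; apply.
  have [_ _ h] := hF' _ hPin.
  have h1 : (r.-1, i) \in D.
    rewrite eD in_fsetD1 h /=; [|lia|lia].
    by rewrite andbT xpair_eqE; lia.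
  have h2 : (r, i.-1) \in D.
    rewrite eD in_fsetD1 h /=; [|lia|lia].
    by rewrite andbT xpair_eqE; lia.
  move: h1 h2; rewrite !(std_in hF hS) //; try lia.
Qed.

Lemma cX0 (D : diagram) b : is_ferrers D -> cX D b 0 = 0.
Proof.
move=> hF; rewrite /cX; apply/eqP; rewrite cardfs_eq0; apply/eqP/fsetP => p.
rewrite sep_mem inE; apply/negbTE; apply/negP => /andP [hp /andP [/eqP e _]].
by have [] := hF _ hp; rewrite e.
Qed.

Lemma cY0 (D : diagram) a : is_ferrers D -> cY D a 0 = 0.
Proof.
move=> hF; rewrite /cY; apply/eqP; rewrite cardfs_eq0; apply/eqP/fsetP => p.
rewrite sep_mem inE; apply/negbTE; apply/negP => /andP [hp /andP [/eqP e _]].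
by have [_ h _] := hF _ hp; move: h; rewrite e.
Qed.

Lemma std_setup (D : diagram) d a b : 2 <= d -> d - 1 <= a -> d - 1 <= b ->
  is_ferrers D -> standard_form D d a b ->
  exists M, [/\ 0 < M, bounded D M, (forall r, b + cX D b r < M),
              (forall i, a + cY D a i < M) & a < M /\ b < M].
Proof.
move=> hd ha hb hF hS.
have [hx hy hmem] := std_memb hd ha hb hF hS.
have [M hM hB] := bound_pos D.
have hab : (a, b) \in D by rewrite (std_in hF hS) // !leqnn.
have [haM hbM] := hB _ hab; rewrite /= in haM hbM.
exists M; split => //.
- move=> r; case: (posnP (cX D b r)) => [->|hpos]; first by rewrite addn0.
  case: (posnP r) => [e|hr]; first by move: hpos; rewrite e cX0.
  have : (r, b + cX D b r) \in D by rewrite hmem /memb; apply/orP; right; apply/orP; left; lia.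
  by move/hB => [].
- move=> i; case: (posnP (cY D a i)) => [->|hpos]; first by rewrite addn0.
  case: (posnP i) => [e|hi]; first by move: hpos; rewrite e cY0.
  have : (a + cY D a i, i) \in D by rewrite hmem /memb; apply/orP; right; apply/orP; right; lia.
  by move/hB => [].
Qed.

Local Open Scope ring_scope.

Lemma Delta (D : diagram) d a b j : (2 <= d)%N -> (d - 1 <= a)%N -> (d - 1 <= b)%N ->
  is_ferrers D -> standard_form D d a b -> (j.+1 < d)%N ->
  (nu D d j.+1)%:Z = (nu D d j)%:Z + (b%:Z - a%:Z + d%:Z - 2 - 2 * j%:Z)
     + (cX D b (d - 1 - j)%N)%:Z - (cY D a j.+1)%:Z.
Proof.
move=> hd ha hb hF hS hj.
have [hx hy hmem] := std_memb hd ha hb hF hS.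
have [M [hM hB hxM hyM [haM hbM]]] := std_setup hd ha hb hF hS.
rewrite (nu_N d j.+1 hM hF hB) (nu_N d j hM hF hB).
have e1 := N_Pform ha hb hj hx hy hxM hyM haM hbM hmem.
have e0 := N_Pform ha hb (ltnW hj) hx hy hxM hyM haM hbM hmem.
rewrite Pform_step -e0 in e1.
have hxj : (if j is 0 then 0 else (cX D b (d - 1 - j)%N)%:Z) = (cX D b (d - 1 - j)%N)%:Z.
  by case: j {hj e0 e1} => [|j] //; rewrite subn0 hx.
rewrite hxj in e1; lia.
Qed.

Local Open Scope nat_scope.

Lemma irr_nec (D : diagram) d a b : 2 <= d -> d - 1 <= a -> d - 1 <= b ->
  is_ferrers D -> standard_form D d a b -> irreducible D d ->
  [/\ nu D d 0 = nu_min D d, nu D d (d - 1) = nu_min D d &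
      (a = b /\ b = d - 1 -> exists j, 1 <= j <= d - 2 /\ nu D d j = nu D d 0)].
Proof.
move=> hd ha hb hF hS hI.
have hd0 : 0 < d by lia.
have [hx hy hmem] := std_memb hd ha hb hF hS.
set x := cX D b in hx hmem *; set y := cY D a in hy hmem *.
have hx0 : x 0 = 0 by exact: cX0.
have hy0 : y 0 = 0 by exact: cY0.
set m := nu_min D d.
have hle : forall j, j < d -> m <= nu D d j by move=> j; apply: numin_le.
have Dl := fun j => @Delta D d a b j hd ha hb hF hS.
have hfirst : nu D d 0 = m.
  apply/eqP; apply: contraT => hne.
  have exP : exists j, (j < d) && (nu D d j == m).
    by have [j hj e] := numin_ex D hd0; exists j; rewrite hj -e eqxx.
  case: (ex_minnP exP) => jm /andP [hjm /eqP ejm] minj.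
  have hjm0 : 0 < jm by case: jm hjm ejm minj => // _ e; move: hne; rewrite e eqxx.
  have hJ : forall j, j < d -> nu D d j = m -> jm <= j.
    by move=> j hj e; apply: minj; rewrite hj e eqxx.
  have clA : jm <= d - 2 /\ x (d - jm - 1) <= x (d - jm).
    have H : ~ (jm = d - 1 \/ x (d - jm) < x (d - jm - 1)).
      move=> hor.
      move: hI; apply: (@reducible_add D d (d - jm, b + x (d - jm) + 1)) => //.
      + rewrite hmem /memb; lia.
      + apply: ferrers_add => //; try lia.
        * case: hor => [e|h]; [left; lia | right].
          have hjle : jm <= d - 2.
            case: (leqP jm (d - 2)) => // hg.
            by move: h; rewrite (_ : d - jm - 1 = 0); [rewrite hx0 | lia].
          rewrite -subn1 hmem /memb; lia.
        * right; rewrite hmem /memb.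
          case: (posnP (x (d - jm))) => h; lia.
      + move=> j hj e /=; have := hJ _ hj e; lia.
    lia.
  have clB : y jm <= y jm.+1.
    case: (leqP (y jm) (y jm.+1)) => // hlt; exfalso.
    move: hI; apply: (@reducible_rem D d (a + y jm, jm)) => //.
    + rewrite hmem /memb; lia.
    + apply: ferrers_rem => //.
      * rewrite hmem /memb; lia.
      * rewrite hmem /memb; lia.
      * rewrite hmem /memb; lia.
    + move=> j hj e /=; have := hJ _ hj e; lia.
  have e1 := Dl jm.-1; rewrite (prednK hjm0) (_ : d - 1 - jm.-1 = d - jm) in e1; last by lia.
  have e2 := Dl jm; rewrite (_ : d - 1 - jm = d - jm - 1) in e2; last by lia.
  have hprev : m < nu D d jm.-1.
    have := hle jm.-1 ltac:(lia).
    rewrite leq_eqVlt => /orP [/eqP e|//].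
    by have := hJ jm.-1 ltac:(lia) (esym e); lia.
  have hnext := hle jm.+1 ltac:(lia).
  have := e1 ltac:(lia); have := e2 ltac:(lia); rewrite /x /y in clA clB.
  lia.
have hlast : nu D d (d - 1) = m.
  apply/eqP; apply: contraT => hne.
  have exP : exists j, (j < d) && (nu D d j == m).
    by have [j hj e] := numin_ex D hd0; exists j; rewrite hj -e eqxx.
  have ubP : forall j, (j < d) && (nu D d j == m) -> j <= d.
    by move=> j /andP [h _]; lia.
  case: (ex_maxnP exP ubP) => jM /andP [hjM /eqP ejM] maxj.
  have hjM1 : jM <= d - 2.
    case: (leqP jM (d - 2)) => // hg; move: hne.
    by rewrite (_ : d - 1 = jM) ?ejM ?eqxx //; lia.
  have hJ : forall j, j < d -> nu D d j = m -> j <= jM.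
    by move=> j hj e; apply: maxj; rewrite hj e eqxx.
  have clC : 0 < jM /\ y jM <= y jM.+1.
    have H : ~ (jM = 0 \/ y jM.+1 < y jM).
      move=> hor.
      move: hI; apply: (@reducible_add D d (a + y jM.+1 + 1, jM.+1)) => //.
      + rewrite hmem /memb; lia.
      + apply: ferrers_add => //; try lia.
        * right; rewrite hmem /memb.
          case: (posnP (y jM.+1)) => h; lia.
        * case: hor => [e|h]; [left; lia | right].
          have hj0 : 0 < jM.
            case: (posnP jM) => // e; by move: h; rewrite e hy0.
          rewrite hmem /memb /=; lia.
      + move=> j hj e /=; have := hJ _ hj e; lia.
    lia.
  have clD : x (d - 1 - jM) <= x (d - jM).
    case: (leqP (x (d - 1 - jM)) (x (d - jM))) => // hlt; exfalso.
    move: hI; apply: (@reducible_rem D d (d - 1 - jM, b + x (d - 1 - jM))) => //.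
    + rewrite hmem /memb; lia.
    + apply: ferrers_rem => //.
      * rewrite hmem /memb; lia.
      * rewrite (_ : (d - 1 - jM).+1 = d - jM); last by lia.
        rewrite hmem /memb; lia.
      * rewrite hmem /memb; lia.
    + move=> j hj e /=; have := hJ _ hj e; lia.
  have e1 := Dl jM.-1; rewrite (prednK (proj1 clC)) (_ : d - 1 - jM.-1 = d - jM) in e1; last by lia.
  have e2 := Dl jM.
  have hnext : m < nu D d jM.+1.
    have := hle jM.+1 ltac:(lia).
    rewrite leq_eqVlt => /orP [/eqP e|//].
    by have := hJ jM.+1 ltac:(lia) (esym e); lia.
  have hprev := hle jM.-1 ltac:(lia).
  have := e1 ltac:(lia); have := e2 ltac:(lia); rewrite /x /y in clC clD.
  lia.
split; [by [] | by [] | ].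
move=> [eab ebd].
case: (boolP (has (fun j => nu D d j == nu D d 0) (iota 1 (d - 2)))) => hh.
  move/hasP: hh => [j]; rewrite mem_iota => hj /eqP e; exists j; split => //; lia.
exfalso; move: hI; apply: (@reducible_rem D d (a, b)) => //.
- by rewrite (std_in hF hS) // !leqnn.
- apply: ferrers_rem => //.
  + by rewrite (std_in hF hS) // !leqnn.
  + rewrite hmem /memb hy; lia.
  + rewrite hmem /memb hx; lia.
- move=> j hj e /=; apply/negP => hc.
  move/hasP: hh; apply; exists j; first by rewrite mem_iota; lia.
  by rewrite e hfirst.
Qed.

Local Open Scope ring_scope.

Lemma sum_rev_int (n : nat) (F : nat -> int) :
  \sum_(0 <= i < n) F (n - i)%N = \sum_(1 <= i < n.+1) F i.
Proof.
rewrite big_add1 /= big_nat_rev /=; apply: eq_big_nat => i /andP [_ hi].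
congr F; lia.
Qed.

Lemma Pform_last d a b (X Y : nat -> int) : (2 <= d)%N ->
  Pform d a b X Y (d - 1) = (d - 1)%:Z * (b%:Z - a%:Z)
    + \sum_(1 <= i < d - 1) X i - \sum_(1 <= i < d - 1) Y i - Y (d - 1)%N.
Proof.
move=> hd; rewrite /Pform.
have e1 : (d - 1).-1 = (d - 2)%N by lia.
have e2 : (d - 1 = (d - 2).+1)%N by lia.
rewrite e1 (_ : (d - 1).+1 = d) ?prednK; last by lia.
rewrite (eq_big_nat _ _ (F2 := fun i => X (d - 2 - i)%N)) // sum_rev_int -e2.
have hY : \sum_(1 <= i < (d - 1).+1) Y i = \sum_(1 <= i < d - 1) Y i + Y (d - 1)%N.
  by rewrite big_nat_recr //=; lia.
rewrite (_ : (d - 1).+1 = d) in hY; last by lia.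
rewrite hY.
have hd1 : ((d - 1)%N : int) = d%:Z - 1 by lia.
rewrite hd1; ring.
Qed.

Lemma Pform_eq d a b (X Y X' Y' : nat -> int) j :
  (forall i, (0 < i <= d - 2)%N -> X i = X' i /\ Y i = Y' i) -> (j <= d - 2)%N ->
  Pform d a b X Y j = Pform d a b X' Y' j.
Proof.
move=> h hj; rewrite /Pform; congr (_ + _ - _).
- apply: eq_big_nat => i hi; apply: (proj1 (h _ _)); lia.
- apply: eq_big_nat => i hi; apply: (proj2 (h _ _)); lia.
Qed.

Lemma sum_elem (n k : nat) (F : nat -> nat) : (k < n)%N -> (F k <= \sum_(0 <= i < n) F i)%N.
Proof.
elim: n => [//|n IH] hk; rewrite big_nat_recr //=.
case: (ltngtP k n) => h.
- by apply: leq_trans (IH h) (leq_addr _ _).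
- lia.
- by rewrite h leq_addl.
Qed.

Local Open Scope nat_scope.

Lemma mono_chain (f : nat -> nat) : (forall k, 0 < k -> f k.+1 <= f k) ->
  forall k k', 0 < k <= k' -> f k' <= f k.
Proof.
move=> hs k k' /andP [hk hkk]; rewrite -(subnKC hkk).
elim: (k' - k) => [|n IH]; first by rewrite addn0.
by rewrite addnS; apply: leq_trans IH; apply: hs; lia.
Qed.

Lemma surj d a b (x y : nat -> int) : 2 <= d -> d - 1 <= a -> d - 1 <= b ->
  inP d a b x y ->
  exists D : diagram, Irr d a b D /\
    (forall i, 1 <= i <= d - 2 -> (cX D b i)%:Z = x i /\ (cY D a i)%:Z = y i).
Proof.
move=> hd ha hb [hmono hnn hPf hsum hext].
pose xn r := if 0 < r <= d - 2 then `|x r|%N else 0.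
pose yn r := if 0 < r <= d - 2 then `|y r|%N else 0.
have hxn0 : forall r, d - 1 <= r -> xn r = 0 by move=> r hr; rewrite /xn ifF //; lia.
have hyn0 : forall r, d - 1 <= r -> yn r = 0 by move=> r hr; rewrite /yn ifF //; lia.
have hxpos : forall r, xn r = 0 \/ 0 < r <= d - 2 by move=> r; rewrite /xn; case: ifP; auto.
have hypos : forall r, yn r = 0 \/ 0 < r <= d - 2 by move=> r; rewrite /yn; case: ifP; auto.
have hagree : forall i, 0 < i <= d - 2 -> (xn i)%:Z = x i /\ (yn i)%:Z = y i.
  move=> i hi; rewrite /xn /yn hi; have [h1 h2] := hnn i hi; split; lia.
have hxmono : forall k k', 0 < k <= k' -> xn k' <= xn k.
  apply: mono_chain => k hk; rewrite /xn.
  case: (boolP (0 < k.+1 <= d - 2)) => h; last by [].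
  have [h1 _] := hmono k ltac:(lia); have [h2 _] := hnn k.+1 h; rewrite ifT; lia.
have hymono : forall k k', 0 < k <= k' -> yn k' <= yn k.
  apply: mono_chain => k hk; rewrite /yn.
  case: (boolP (0 < k.+1 <= d - 2)) => h; last by [].
  have [_ h1] := hmono k ltac:(lia); have [_ h2] := hnn k.+1 h; rewrite ifT; lia.
pose M := (a + b + \sum_(0 <= k < d) (xn k + yn k)).+1.
have hxM : forall r, b + xn r < M.
  move=> r; case: (ltnP r d) => hr.
  - have := sum_elem (fun k => xn k + yn k) hr; rewrite /M /=; lia.
  - rewrite hxn0 /M; lia.
have hyM : forall i, a + yn i < M.
  move=> r; case: (ltnP r d) => hr.
  - have := sum_elem (fun k => xn k + yn k) hr; rewrite /M /=; lia.
  - rewrite hyn0 /M; lia.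
have haM : a < M by rewrite /M; lia.
have hbM : b < M by rewrite /M; lia.
have hmemM : forall r i, memb a b xn yn r i -> r < M /\ i < M.
  move=> r i; rewrite /memb => hm; have := hxM r; have := hyM i.
  have := hxpos r; have := hypos i; split; lia.
pose D : diagram := seq_fset tt [seq p <- grid M | memb a b xn yn p.1 p.2].
have hmem : forall r i, ((r, i) \in D) = memb a b xn yn r i.
  move=> r i; rewrite seq_fsetE mem_filter /=.
  case: (boolP (memb a b xn yn r i)) => //= hm.
  have [h1 h2] := hmemM _ _ hm.
  by apply/allpairsP; exists (r, i); rewrite !mem_iota /=; split => //; lia.
have hB : bounded D M by move=> [r i]; rewrite hmem => /hmemM.
have hM : 0 < M by [].
have hF : is_ferrers D.
  move=> [r i]; rewrite hmem /= => hm.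
  split; [rewrite /memb in hm; lia | rewrite /memb in hm; lia | ].
  move=> i' j' hi' hj'; rewrite hmem.
  have := hxmono i' r ltac:(lia); have := hymono j' i ltac:(lia).
  have := hxpos r; have := hypos i.
  move: hm; rewrite /memb; lia.
have hS : standard_form D d a b.
  move=> n hn r i; rewrite hmem /memb.
  have : (a, b) \in D by rewrite hmem /memb; lia.
  move=> /hn /= [h1 h2].
  split.
  - move=> [hm [hr hi]]; move: hm; rewrite hxn0 ?hyn0; lia.
  - move=> [hr hi]; have e1 := hxn0 r ltac:(lia); have e2 := hyn0 i ltac:(lia).
    rewrite e1 e2; split; [lia | split; lia].
have hcx : forall i, 0 < i <= d - 2 -> cX D b i = xn i.
  move=> i hi; rewrite (@cX_row D M b i (b + xn i) hB); [lia | lia | ].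
  move=> k; rewrite hmem /memb; lia.
have hcy : forall i, 0 < i <= d - 2 -> cY D a i = yn i.
  move=> i hi; rewrite (@cY_col D M a i (a + yn i) hB); [lia | lia | ].
  move=> k; rewrite hmem /memb; lia.
exists D; split; last first.
  move=> i hi; rewrite hcx ?hcy //; exact: hagree.
have hP : forall j, j < d -> ((nu D d j)%:Z - (nu D d 0)%:Z)%R =
    Pform d a b (fun i => (xn i)%:Z) (fun i => (yn i)%:Z) j.
  move=> j hj; rewrite (nu_N d j hM hF hB) (nu_N d 0 hM hF hB).
  exact: (N_Pform ha hb hj hxn0 hyn0 hxM hyM haM hbM hmem).
have hPe : forall j, j <= d - 2 ->
    Pform d a b (fun i => (xn i)%:Z) (fun i => (yn i)%:Z) j = Pform d a b x y j.
  move=> j hj; apply: Pform_eq => // i hi; have [h1 h2] := hagree i hi; by split.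
have hlast : nu D d (d - 1) = nu D d 0.
  have := hP (d - 1) ltac:(lia); rewrite Pform_last // hyn0 //.
  have -> : (\sum_(1 <= i < d - 1) (xn i)%:Z = \sum_(1 <= i < d - 1) x i)%R.
    by apply: eq_big_nat => i hi; apply: (proj1 (hagree i _)); lia.
  have -> : (\sum_(1 <= i < d - 1) (yn i)%:Z = \sum_(1 <= i < d - 1) y i)%R.
    by apply: eq_big_nat => i hi; apply: (proj2 (hagree i _)); lia.
  move: hsum; lia.
split => //; apply: (irr_suff hd ha hb hF hS) => //.
- move=> j hj; case: (posnP j) => [->//|hj0].
  case: (leqP j (d - 2)) => hj2.
  + have := hP j hj; rewrite hPe // => e; have := hPf j ltac:(lia); lia.
  + by rewrite (_ : j = d - 1) ?hlast //; lia.
- move=> hab; have [j [hj e]] := hext hab; exists j; split => //.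
  have := hP j ltac:(lia); rewrite hPe ?e; lia.
Qed.

Local Open Scope fset_scope.
Local Open Scope ring_scope.

Theorem theorem5p3 (d a b : nat) :
  (2 <= d)%N -> (0 < a)%N -> (0 < b)%N -> (d - 1 <= minn a b)%N ->
  [/\ (* well defined: Psi maps Irr into P ∩ Z^(2d-4) *)
      (forall D : diagram, Irr d a b D ->
         inP d a b (fun i => (cX D b i)%:Z) (fun i => (cY D a i)%:Z)),
      (* injective *)
      (forall D1 D2 : diagram, Irr d a b D1 -> Irr d a b D2 ->
         (forall i, (1 <= i <= d - 2)%N ->
            cX D1 b i = cX D2 b i /\ cY D1 a i = cY D2 a i) ->
         D1 = D2)
    & (* surjective *)
      (forall x y : nat -> int, inP d a b x y ->
         exists D : diagram, Irr d a b D /\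
           (forall i, (1 <= i <= d - 2)%N ->
              (cX D b i)%:Z = x i /\ (cY D a i)%:Z = y i))].
Proof.
move=> hd ha0 hb0 hmin.
have ha : (d - 1 <= a)%N by move: hmin; rewrite leq_min => /andP [].
have hb : (d - 1 <= b)%N by move: hmin; rewrite leq_min => /andP [].
split.
- move=> D [hF hS hI].
  have [hfirst hlast hextra] := irr_nec hd ha hb hF hS hI.
  have [hx hy hmem] := std_memb hd ha hb hF hS.
  have [M [hM hB hxM hyM [haM hbM]]] := std_setup hd ha hb hF hS.
  have hP : forall j, (j < d)%N -> (nu D d j)%:Z - (nu D d 0)%:Z =
      Pform d a b (fun i => (cX D b i)%:Z) (fun i => (cY D a i)%:Z) j.
    move=> j hj; rewrite (nu_N d j hM hF hB) (nu_N d 0 hM hF hB).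
    exact: (N_Pform ha hb hj hx hy hxM hyM haM hbM hmem).
  split.
  + move=> j hj; split; rewrite lez_nat.
    * case: (posnP (cX D b j.+1)) => [->//|hpos].
      have : ((j.+1, (b + cX D b j.+1)%N) \in D) by rewrite hmem /memb; lia.
      move/hF => [_ _ h].
      have := h j (b + cX D b j.+1)%N; rewrite /= => /(_ ltac:(lia) ltac:(lia)).
      rewrite hmem /memb; lia.
    * case: (posnP (cY D a j.+1)) => [->//|hpos].
      have : (((a + cY D a j.+1)%N, j.+1) \in D) by rewrite hmem /memb; lia.
      move/hF => [_ _ h].
      have := h (a + cY D a j.+1)%N j; rewrite /= => /(_ ltac:(lia) ltac:(lia)).
      rewrite hmem /memb; lia.
  + by move=> j _; split.
  + move=> j hj; rewrite -hP; last by lia.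
    have := numin_le D (_ : (j < d)%N) ; rewrite -hfirst => h; have := h ltac:(lia); lia.
  + have := hP (d - 1)%N ltac:(lia); rewrite Pform_last // hlast hfirst subrr hy //; lia.
  + move=> hab; have [j [hj e]] := hextra hab; exists j; split => //.
    by rewrite -hP ?e ?subrr //; lia.
- move=> D1 D2 [hF1 hS1 _] [hF2 hS2 _] heq.
  have [hx1 hy1 hm1] := std_memb hd ha hb hF1 hS1.
  have [hx2 hy2 hm2] := std_memb hd ha hb hF2 hS2.
  have ex : forall r, cX D1 b r = cX D2 b r.
    move=> r; case: (posnP r) => [->|hr]; first by rewrite !cX0.
    case: (leqP (d - 1) r) => hr2; first by rewrite hx1 ?hx2.
    by have [] := heq r ltac:(lia).
  have ey : forall r, cY D1 a r = cY D2 a r.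
    move=> r; case: (posnP r) => [->|hr]; first by rewrite !cY0.
    case: (leqP (d - 1) r) => hr2; first by rewrite hy1 ?hy2.
    by have [] := heq r ltac:(lia).
  apply/fsetP => [[r i]]; rewrite hm1 hm2 /memb ex ey //.
- move=> x y hin; exact: surj.
Qed.
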